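(* Let $t_f>0$. Let $b$ be a box in an octree and let $c\in b$ be a QBX center with expansion radius $r_c>0$ that is suspended in $b$. Then the closed cube $\{x\in\mathbb R^3:|x-c|_\infty\le 4\sqrt3\,r_c/t_f\}$ contains the $2$-near neighborhood of $b$.
   Context: An octree is a rooted tree of axis-aligned closed cubes (''boxes'') in $\mathbb R^3$. For a box $b$, $|b|$ denotes its $\ell^\infty$ radius (half side length) and $c_b$ its center. The $k$-near neighborhood of $b$ is the closed cube $\{x:|x-c_b|_\infty\le|b|(1+2k)\}$. For target confinement factor $t_f$, $\mathsf{TCR}(b)$ is the closed Euclidean ball of radius $\sqrt3|b|(1+t_f)$ centered at $c_b$. A center $c\in b$ with radius $r_c$ is suspended in $b$ if for every one of the eight cubes $b'$ of radius $|b|/2$ obtained by bisecting $b$ along each axis that contains $c$, the closed Euclidean ball $\{x:|x-c|_2\le r_c\}$ is not contained in $\mathsf{TCR}(b')$. *)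

(* Defs.v *)
From Stdlib Require Import Reals Lra.
Open Scope R_scope.

Record pt3 := Pt3 { px : R; py : R; pz : R }.

Definition sub3 (x y : pt3) : pt3 := Pt3 (px x - px y) (py x - py y) (pz x - pz y).

Definition norm_inf (v : pt3) : R := Rmax (Rabs (px v)) (Rmax (Rabs (py v)) (Rabs (pz v))).
Definition norm_2 (v : pt3) : R := sqrt (px v ^ 2 + py v ^ 2 + pz v ^ 2).

(* An axis-aligned closed cube ("box"), given by its center c_b and l-inf radius |b| > 0. *)
Record box := Box { bcenter : pt3; brad : R }.

Definition in_box (b : box) (x : pt3) : Prop := norm_inf (sub3 x (bcenter b)) <= brad b.

Definition near_nbhd (k : R) (b : box) (x : pt3) : Prop :=
  norm_inf (sub3 x (bcenter b)) <= brad b * (1 + 2 * k).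

Definition TCR (tf : R) (b : box) (x : pt3) : Prop :=
  norm_2 (sub3 x (bcenter b)) <= sqrt 3 * brad b * (1 + tf).

Definition sgn (s : bool) : R := if s then 1 else -1.
Definition child (b : box) (s1 s2 s3 : bool) : box :=
  Box (Pt3 (px (bcenter b) + sgn s1 * (brad b / 2))
           (py (bcenter b) + sgn s2 * (brad b / 2))
           (pz (bcenter b) + sgn s3 * (brad b / 2)))
      (brad b / 2).

Definition ball2 (c : pt3) (r : R) (x : pt3) : Prop := norm_2 (sub3 x c) <= r.

Definition suspended (tf : R) (b : box) (c : pt3) (rc : R) : Prop :=
  in_box b c /\
  forall s1 s2 s3 : bool,
    in_box (child b s1 s2 s3) c ->
    ~ (forall x, ball2 c rc x -> TCR tf (child b s1 s2 s3) x).

(* Main.v *)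
Require Import Defs.
From Stdlib Require Import Reals Lra Psatz.
Open Scope R_scope.

Lemma Rabs_le_inv x m : Rabs x <= m -> - m <= x <= m.
Proof. intros H. unfold Rabs in H. destruct (Rcase_abs x); lra. Qed.

Lemma ninf_le (v : pt3) m : Rabs (px v) <= m -> Rabs (py v) <= m -> Rabs (pz v) <= m -> norm_inf v <= m.
Proof. intros. unfold norm_inf. repeat apply Rmax_lub; auto. Qed.

Lemma ninf_ge (v : pt3) m : norm_inf v <= m -> Rabs (px v) <= m /\ Rabs (py v) <= m /\ Rabs (pz v) <= m.
Proof.
  unfold norm_inf; intros H.
  pose proof (Rmax_l (Rabs (px v)) (Rmax (Rabs (py v)) (Rabs (pz v)))).
  pose proof (Rmax_r (Rabs (px v)) (Rmax (Rabs (py v)) (Rabs (pz v)))).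
  pose proof (Rmax_l (Rabs (py v)) (Rabs (pz v))).
  pose proof (Rmax_r (Rabs (py v)) (Rabs (pz v))). lra.
Qed.

Lemma tri a b c d e f :
  sqrt ((a+d)^2+(b+e)^2+(c+f)^2) <= sqrt (a^2+b^2+c^2) + sqrt (d^2+e^2+f^2).
Proof.
  set (P := a^2+b^2+c^2). set (Q := d^2+e^2+f^2).
  assert (HP : 0 <= P) by (unfold P; nra). assert (HQ : 0 <= Q) by (unfold Q; nra).
  pose proof (sqrt_pos P). pose proof (sqrt_pos Q).
  pose proof (sqrt_sqrt P HP). pose proof (sqrt_sqrt Q HQ).
  assert (L : P*Q - (a*d+b*e+c*f)^2 = (a*e-b*d)^2+(a*f-c*d)^2+(b*f-c*e)^2) by (unfold P,Q; ring).
  assert (Hd : a*d+b*e+c*f <= sqrt P * sqrt Q).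
  { set (t := a*d+b*e+c*f) in *. set (u := sqrt P * sqrt Q).
    assert (U0 : 0 <= u) by (unfold u; nra).
    assert (U2 : u*u = P*Q).
    { unfold u. replace (sqrt P * sqrt Q * (sqrt P * sqrt Q)) with ((sqrt P * sqrt P) * (sqrt Q * sqrt Q)) by ring.
      rewrite sqrt_sqrt, sqrt_sqrt; auto. }
    destruct (Rle_dec t u) as [r|r]; [exact r|].
    apply Rnot_le_lt in r. assert (t*t > u*u) by nra.
    assert (Z : 0 <= (a*e-b*d)^2+(a*f-c*d)^2+(b*f-c*e)^2) by (pose proof (pow2_ge_0 (a*e-b*d)); pose proof (pow2_ge_0 (a*f-c*d)); pose proof (pow2_ge_0 (b*f-c*e)); lra). rewrite <- L in Z. simpl in Z. lra. }
  rewrite <- (sqrt_pow2 (sqrt P + sqrt Q)) by lra.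
  apply sqrt_le_1_alt. unfold P, Q in *. nra.
Qed.

Lemma n2_le_inf (v : pt3) m : norm_inf v <= m -> norm_2 v <= sqrt 3 * m.
Proof.
  intros H. destruct (ninf_ge v m H) as (H1 & H2 & H3).
  assert (0 <= m) by (pose proof (Rabs_pos (px v)); lra).
  unfold norm_2. rewrite <- (sqrt_pow2 m) by lra.
  rewrite <- sqrt_mult_alt by lra. apply sqrt_le_1_alt.
  apply Rabs_le_inv in H1. apply Rabs_le_inv in H2. apply Rabs_le_inv in H3. nra.
Qed.

Lemma coord_child x0 c0 h : Rabs (c0 - x0) <= h ->
  exists s, Rabs (c0 - (x0 + sgn s * (h/2))) <= h/2.
Proof.
  intros H. apply Rabs_le_inv in H. destruct (Rle_dec x0 c0).
  - exists true. simpl. apply Rabs_le. lra.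
  - exists false. simpl. apply Rabs_le. lra.
Qed.

Lemma dummy_end : True. Proof. exact I. Qed.

Theorem mainTheorem4 (tf : R) (b : box) (c : pt3) (rc : R) :
  0 < tf -> 0 < brad b -> 0 < rc ->
  in_box b c ->
  suspended tf b c rc ->
  forall x : pt3, near_nbhd 2 b x ->
    norm_inf (sub3 x c) <= 4 * sqrt 3 * rc / tf.
Proof.
  intros Htf Hh Hrc Hin [_ Hs] x Hx.
  unfold in_box in Hin. destruct (ninf_ge _ _ Hin) as (C1 & C2 & C3). simpl in C1, C2, C3.
  destruct (coord_child _ _ _ C1) as [s1 S1].
  destruct (coord_child _ _ _ C2) as [s2 S2].
  destruct (coord_child _ _ _ C3) as [s3 S3].
  assert (Hc : in_box (child b s1 s2 s3) c).
  { unfold in_box; apply ninf_le; simpl; auto. }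
  pose proof (sqrt_lt_R0 3 ltac:(lra)) as Hs3pos.
  pose proof (sqrt_sqrt 3 ltac:(lra)) as Hs3.
  assert (Key : 2 * rc > sqrt 3 * brad b * tf).
  { destruct (Rlt_dec (sqrt 3 * brad b * tf) (2*rc)) as [r|r]; [lra|].
    exfalso. apply (Hs _ _ _ Hc). intros y Hy. unfold ball2 in Hy. unfold TCR.
    pose proof (n2_le_inf _ _ Hc) as Hcn.
    unfold norm_2, sub3 in *; simpl in *.
    set (cb := bcenter b) in *.
    eapply Rle_trans.
    2:{ assert (sqrt 3 * (brad b/2) + rc <= sqrt 3 * (brad b / 2) * (1 + tf)) by nra.
        apply H. }
    eapply Rle_trans. 
    2:{ apply Rplus_le_compat; [exact Hcn | exact Hy]. }
    eapply Rle_trans; [| rewrite Rplus_comm; apply tri].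
    right. f_equal. ring. }
  unfold near_nbhd in Hx. destruct (ninf_ge _ _ Hx) as (X1 & X2 & X3). simpl in X1, X2, X3.
  assert (B : 6 * brad b <= 4 * sqrt 3 * rc / tf).
  { apply (Rmult_le_reg_r tf); [lra|]. replace (4 * sqrt 3 * rc / tf * tf) with (4 * sqrt 3 * rc) by (field; lra). nra. }
  assert (Tr : forall p q r : R, Rabs (p - r) <= brad b * (1 + 2*2) -> Rabs (q - r) <= brad b -> Rabs (p - q) <= 4 * sqrt 3 * rc / tf).
  { intros p q r E1 E2. apply Rabs_le_inv in E1. apply Rabs_le_inv in E2. apply Rabs_le. lra. }
  apply ninf_le; simpl; eapply Tr; eauto.
Qed.
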